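(* Every GO-space is $C$-selective.
   Context: All spaces are assumed $T_1$. A GO-space (generalized ordered space) is a linearly ordered set with a topology finer than the order topology that has a base of order-convex sets (equivalently, a subspace of a linearly ordered topological space). For spaces $Y$, $X$, a map $\varphi:Y\to\mathcal P(X)\setminus\{\emptyset\}$ is lower semicontinuous (l.s.c.) if $\{y:\varphi(y)\cap U\neq\emptyset\}$ is open in $Y$ for every open $U\subseteq X$; a selection is a map $f:Y\to X$ with $f(y)\in\varphi(y)$ for all $y$. $X$ is $Y$-selective if every l.s.c. map from $Y$ to the family of nonempty closed subsets of $X$ has a continuous selection; $X$ is $C$-selective if it is $Y$-selective for every countable regular space $Y$. *)

(* Defs.v *)
From HB Require Import structures.
From mathcomp Require Import all_boot all_order all_algebra.
From mathcomp Require Import all_classical topology.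
Set Implicit Arguments.
Unset Strict Implicit.
Unset Printing Implicit Defensive.
Local Open Scope classical_set_scope.

Definition linear_order (X : Type) (le : X -> X -> Prop) : Prop :=
  [/\ (forall x, le x x),
      (forall x y, le x y -> le y x -> x = y),
      (forall x y z, le x y -> le y z -> le x z) &
      (forall x y, le x y \/ le y x)].

Definition strict (X : Type) (le : X -> X -> Prop) (x y : X) : Prop :=
  le x y /\ x <> y.

Definition order_convex (X : Type) (le : X -> X -> Prop) (A : set X) : Prop :=
  forall x y z, A x -> A z -> le x y -> le y z -> A y.

(** (X, le) is a GO-space: le is a linear order, the topology of X is finer
    than the order topology (open rays are open; these form a subbase of
    the order topology), and the topology has a base of order-convex sets. *)
Definition GO_space (X : topologicalType) (le : X -> X -> Prop) : Prop :=
  [/\ linear_order le,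
      (forall a : X, open [set x | strict le x a]),
      (forall a : X, open [set x | strict le a x]) &
      (forall (U : set X) (x : X), open U -> U x ->
         exists V : set X, [/\ open V, order_convex le V, V x & V `<=` U])].

Definition lsc (Y X : topologicalType) (phi : Y -> set X) : Prop :=
  forall U : set X, open U -> open [set y | phi y `&` U !=set0].

Definition selective (Y X : topologicalType) : Prop :=
  forall phi : Y -> set X,
    (forall y, closed (phi y) /\ phi y !=set0) -> lsc phi ->
    exists f : Y -> X, continuous f /\ (forall y, phi y (f y)).

Definition C_selective (X : topologicalType) : Prop :=
  forall Y : topologicalType,
    countable [set: Y] -> accessible_space Y -> regular_space Y ->
    selective Y X.

(* Main.v *)
Require Import Defs.
From HB Require Import structures.
From mathcomp Require Import all_boot all_order all_algebra.
From mathcomp Require Import all_classical topology.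
Local Open Scope classical_set_scope.

Section Helpers.
Context {T : topologicalType}.

Lemma openP' (S : set T) :
  (forall z, S z -> exists B, [/\ open B, B z & B `<=` S]) -> open S.
Proof.
move=> H; rewrite openE => z /H [B [oB Bz BS]].
rewrite /interior nbhsE; exists B => //.
Qed.

Lemma closureP' {A B : set T} {p : T} : closure A p -> open B -> B p -> A `&` B !=set0.
Proof. by move=> c oB Bp; apply: c; apply: open_nbhs_nbhs. Qed.

Lemma closure_min {A B : set T} : A `<=` B -> closed B -> closure A `<=` B.
Proof. by move=> AB cB; apply: subset_trans cB; apply: closureS. Qed.

Lemma open_const (P : Prop) : open [set _ : T | P].
Proof.
case: (pselect P) => HP.
  by rewrite (_ : [set _ | P] = setT); [exact: openT | apply/seteqP; split].
by rewrite (_ : [set _ | P] = set0); [exact: open0 | apply/seteqP; split].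
Qed.

Lemma closed_ext {A B : set T} : (forall x, A x <-> B x) -> closed B -> closed A.
Proof.
move=> H; rewrite (_ : A = B) //; apply/funext => x; apply/propext; exact: H.
Qed.

End Helpers.

Fixpoint iterI {T : Type} (N : nat -> set T) (j : nat) : set T :=
  match j with 0 => N 0 | j'.+1 => iterI N j' `&` N j'.+1 end.

Lemma iterI_dec T (N : nat -> set T) i j : (i <= j)%N -> iterI N j `<=` iterI N i.
Proof.
elim: j => [|j IH]; first by rewrite leqn0 => /eqP ->.
rewrite leq_eqVlt => /orP [/eqP -> //| ]; rewrite ltnS => /IH H x [Hx _].
exact: H.
Qed.

Lemma iterI_sub T (N : nat -> set T) i j : (i <= j)%N -> iterI N j `<=` N i.
Proof.
move=> /(@iterI_dec _ N i j) H x /H; case: i {H} => [//|i] /= [].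
by [].
Qed.

Lemma iterI_all T (N : nat -> set T) x : (forall i, N i x) -> forall j, iterI N j x.
Proof. by move=> H; elim => [|j IH] //=. Qed.

Lemma iterI_open (T : topologicalType) (N : nat -> set T) :
  (forall i, open (N i)) -> forall j, open (iterI N j).
Proof. by move=> H; elim => [|j IH] //=; exact: openI. Qed.

Lemma iterI_closed (T : topologicalType) (N : nat -> set T) :
  (forall i, closed (N i)) -> forall j, closed (iterI N j).
Proof. by move=> H; elim => [|j IH] //=; exact: closedI. Qed.

Lemma dep_seq {A : Type} {I : A -> Prop} {R : nat -> A -> A -> Prop} {a0 : A} :
  I a0 -> (forall n a, I a -> exists b, I b /\ R n a b) ->
  exists s : nat -> A, s 0 = a0 /\ forall n, I (s n) /\ R n (s n) (s n.+1).
Proof.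
move=> I0 H.
pose g n a : A := match pselect (I a) with
  | left Ia => projT1 (cid (H n a Ia)) | right _ => a end.
have gP n a : I a -> I (g n a) /\ R n a (g n a).
  by move=> Ia; rewrite /g; case: pselect => // Ia'; case: cid.
pose s := fix s n := match n with 0 => a0 | n'.+1 => g n' (s n') end.
have sI n : I (s n) by elim: n => [//|n IH] /=; case: (gP n _ IH).
by exists s; split => // n; split => //; case: (gP n _ (sI n)).
Qed.

Lemma enum_surj (Y : Type) (y0 : Y) : countable [set: Y] ->
  exists e : nat -> Y, forall y, exists n, e n = y.
Proof.
move=> /countable_injP [f finj].
pose e n := match pselect (exists y, f y = n) with
  | left H => projT1 (cid H) | right _ => y0 end.
exists e => y; exists (f y); rewrite /e; case: pselect => [H|]; last first.
  by move=> H; exfalso; apply: H; exists y.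
case: cid => y' /= Hy'; apply: finj => //; rewrite inE //.
Qed.

Section ZD.
Context {Y : topologicalType}.
Hypothesis reg : regular_space Y.

Lemma regular_open {U : set Y} {y : Y} : open U -> U y ->
  exists V, [/\ open V, V y & closure V `<=` U].
Proof.
move=> oU Uy.
have nU : nbhs y U by apply: open_nbhs_nbhs.
have := reg y; move=> /(_ U nU) [V nV cVU].
rewrite nbhsE in nV; case: nV => B [oB By] BV.
exists B; split => //; apply: subset_trans cVU; exact: closureS.
Qed.

Lemma zd (e : nat -> Y) (esurj : forall y, exists n, e n = y) (U : set Y) y :
  open U -> U y -> exists W, [/\ open W, closed W, W y & W `<=` U].
Proof.
move=> oU Uy.
have [P0 [oP0 P0y cP0U]] := regular_open oU Uy.
pose Inv (pq : set Y * set Y) := [/\ open pq.1, open pq.2,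
  closure pq.1 `&` closure pq.2 = set0 & closure pq.1 `<=` U].
pose R (n : nat) (pq pq' : set Y * set Y) := [/\ pq.1 `<=` pq'.1,
  pq.2 `<=` pq'.2 & (pq'.1 (e n) \/ pq'.2 (e n))].
have I0 : Inv (P0, set0).
  by split => //=; [exact: open0 | rewrite closure0 setI0].
have step : forall n a, Inv a -> exists b, Inv b /\ R n a b.
  move=> n [P Q] [/= oP oQ dPQ cPU].
  case: (pselect (closure P (e n))) => Hz.
  - have Hz' : (U `&` ~` closure Q) (e n).
      split; first exact: cPU.
      move=> cQ; have : (closure P `&` closure Q) (e n) by [].
      by rewrite dPQ.
    have oUQ : open (U `&` ~` closure Q).
      by apply: openI => //; apply: closed_openC; exact: closed_closure.
    have [Nb [oN Nz cN]] := regular_open oUQ Hz'.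
    exists (P `|` Nb, Q); split; split => //=.
    + exact: openU.
    + rewrite closureU setIUl dPQ set0U; apply/seteqP; split => // x [/cN [_ H] H'].
      exact: H H'.
    + by rewrite closureU => x [/cPU //|/cN []].
    + by left; right; exact: Nz.
  - have oC : open (~` closure P) by apply: closed_openC; exact: closed_closure.
    have [Nb [oN Nz cN]] := regular_open oC Hz.
    exists (P, Q `|` Nb); split; split => //=.
    + exact: openU.
    + rewrite closureU setIUr dPQ set0U; apply/seteqP; split => // x [H /cN H'].
      exact: H' H.
    + by right; right.
have [s [s0 sP]] := dep_seq I0 step.
have smono : forall i j, (i <= j)%N -> (s i).1 `<=` (s j).1 /\ (s i).2 `<=` (s j).2.
  move=> i j; elim: j => [|j IH]; first by rewrite leqn0 => /eqP ->; split.
  rewrite leq_eqVlt => /orP [/eqP ->|]; first by split.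
  rewrite ltnS => /IH [H1 H2].
  have [_ [R1 R2 _]] := sP j.
  by split; [exact: subset_trans R1 | exact: subset_trans R2].
pose A := \bigcup_n (s n).1.
pose B := \bigcup_n (s n).2.
have AB : forall x, A x -> B x -> False.
  move=> x [i _ Ai] [j _ Bj].
  have [Hi _] := smono i (maxn i j) (leq_maxl _ _).
  have [_ Hj] := smono j (maxn i j) (leq_maxr _ _).
  have [[_ _ d _] _] := sP (maxn i j).
  have : (closure (s (maxn i j)).1 `&` closure (s (maxn i j)).2) x.
    by split; apply: subset_closure; [exact: Hi | exact: Hj].
  by rewrite d.
have AorB : forall x, A x \/ B x.
  move=> x; have [n <-] := esurj x; have [_ [_ _ [H|H]]] := sP n.
    by left; exists n.+1.
  by right; exists n.+1.
exists A; split.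
- by apply: bigcup_open => n _; case: (sP n) => [[]].
- have -> : A = ~` B.
    apply/seteqP; split => x; first by move=> Ax Bx; exact: AB x Ax Bx.
    by move=> nB; case: (AorB x) => // Bx; exfalso; exact: nB Bx.
  by apply: open_closedC; apply: bigcup_open => n _; case: (sP n) => [[]].
- by exists 0%N => //; rewrite s0.
- move=> x [n _ Hn]; case: (sP n) => [[_ _ _ cU] _]; apply: cU.
  exact: subset_closure.
Qed.
End ZD.

Section GO.
Context {X : topologicalType}.

Lemma open_ext (A B : set X) : (forall x, A x <-> B x) -> open B -> open A.
Proof.
move=> H; rewrite (_ : A = B) //; apply/funext => x; apply/propext; exact: H.
Qed.

Lemma GO_flip (le : X -> X -> Prop) : GO_space le -> GO_space (fun x y => le y x).
Proof.
case=> [[r a t to] rl rr b]; split.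
- split.
  + by move=> x; exact: r.
  + by move=> x y H1 H2; exact: a x y H2 H1.
  + by move=> x y z H1 H2; exact: t z y x H2 H1.
  + by move=> x y; case: (to x y); [right|left].
- move=> c; apply: open_ext (rr c) => x; rewrite /strict.
  by split => -[H1 H2]; split => // H3; apply: H2.
- move=> c; apply: open_ext (rl c) => x; rewrite /strict.
  by split => -[H1 H2]; split => // H3; apply: H2.
- move=> U x oU Ux; have [V [oV cV Vx VU]] := b U x oU Ux.
  exists V; split => // p q s Vp Vs H1 H2; exact: cV s q p Vs Vp H2 H1.
Qed.

Lemma side_base (le : X -> X -> Prop) : GO_space le ->
  forall (x : X) (N O : nat -> set X),
  (forall i, order_convex le (N i) /\ N i x) ->
  (forall i j, (i <= j)%N -> O j `<=` N i) ->
  (forall G, open G -> G x -> exists i v, [/\ G v, strict le v x & ~ N i v]) ->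
  forall U, open U -> U x -> exists k, forall j, (k <= j)%N ->
    forall w, closure (O j) w -> strict le w x -> U w.
Proof.
move=> [[r a t to] rl rr b] x N O HN HO Hbad U oU Ux.
have [V [oV cV Vx VU]] := b U x oU Ux.
have [i [v [Vv vx nNv]]] := Hbad V oV Vx.
exists i => j ij w cw wx.
have Oj : O j `<=` [set t | strict le v t].
  move=> p /(HO _ _ ij) Np; case: (to p v) => pv.
  - exfalso; apply: nNv; case: (HN i) => cN Nx; exact: cN p v x Np Nx pv vx.1.
  - by split => // vp; apply: nNv; rewrite vp.
have cl : closure (O j) `<=` ~` [set p | strict le p v].
  apply: closure_min.
    move=> p /Oj [vp nvp] [pv _]; apply: nvp; exact: a v p vp pv.
  by rewrite closedC; exact: rl v.
have nwv := cl w cw.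
have vw : le v w.
  case: (to v w) => // wv; case: (pselect (w = v)) => [->|ne]; first exact: r.
  by exfalso; exact: nwv (conj wv ne).
apply: VU; exact: cV v w x Vv Vx vw wx.1.
Qed.

End GO.

Lemma closed_cond {X : topologicalType} (P : Prop) (A : set X) :
  open A -> closed [set w | P -> ~ A w].
Proof.
move=> oA; case: (pselect P) => HP.
  apply: (@closed_ext _ _ (~` A)); last by rewrite closedC.
  by move=> w; split => [H|H _]; [exact: H|exact: H].
apply: (@closed_ext _ _ (setT)); last exact: closedT.
by move=> w; split => // _ /HP.
Qed.

Section KL.
Context {X : topologicalType} (le : X -> X -> Prop).
Hypothesis HGO : GO_space le.
Hypothesis HX : accessible_space X.
Context {Y : topologicalType} (e : nat -> Y).
Hypothesis esurj : forall y, exists n, e n = y.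
Hypothesis zdY : forall (U : set Y) y, open U -> U y ->
  exists W, [/\ open W, closed W, W y & W `<=` U].

Definition inv (psi : Y -> set X) :=
  (forall y, closed (psi y) /\ psi y !=set0) /\ lsc psi.

Lemma KL (psi : Y -> set X) : inv psi -> forall ys : Y,
  exists psi' : Y -> set X, [/\ inv psi', (forall y, psi' y `<=` psi y) &
    exists xs, [/\ psi' ys xs, psi' ys `<=` [set xs] &
      forall U, open U -> U xs -> exists W, [/\ open W, W ys &
        forall y, W y -> psi' y `<=` U]]].
Proof.
move=> [Hcl Hlsc] ys.
have [xs Hxs] := (Hcl ys).2.
have [[r a t to] rl rr b] := HGO.
pose lt := strict le.
pose goodL G := forall y v, psi y v -> G v -> lt v xs -> psi y xs.
pose badL := forall G, open G -> G xs ->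
  exists y v, [/\ psi y v, G v, lt v xs & ~ psi y xs].
pose goodR G := forall y v, psi y v -> G v -> lt xs v -> psi y xs.
pose badR := forall G, open G -> G xs ->
  exists y v, [/\ psi y v, G v, lt xs v & ~ psi y xs].
have [GL [oGL GLx GLor]] : exists GL, [/\ open GL, GL xs & goodL GL \/ badL].
  case: (pselect (exists G, [/\ open G, G xs & goodL G])) => [[G0 [oG Gx gG]]|nG].
    by exists G0; split => //; left.
  exists setT; split => //; first exact: openT.
  right => G oG Gx; apply: contrapT => H; apply: nG; exists G; split => //.
  move=> y v yv Gv vx; apply: contrapT => nyx; apply: H; by exists y, v; split.
have [GR [oGR GRx GRor]] : exists GR, [/\ open GR, GR xs & goodR GR \/ badR].
  case: (pselect (exists G, [/\ open G, G xs & goodR G])) => [[G0 [oG Gx gG]]|nG].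
    by exists G0; split => //; left.
  exists setT; split => //; first exact: openT.
  right => G oG Gx; apply: contrapT => H; apply: nG; exists G; split => //.
  move=> y v yv Gv vx; apply: contrapT => nyx; apply: H; by exists y, v; split.
pose PL := goodL GL.
pose PR := goodR GR.
have nPL : ~ PL -> badL by case: GLor.
have nPR : ~ PR -> badR by case: GRor.
have [N HN] : exists N : nat -> set X, forall i, [/\ open (N i),
    order_convex le (N i), N i xs &
    (forall v, psi (e i) v -> ~ psi (e i) xs -> ~ N i v)].
  suff H : forall i, exists S, [/\ open S, order_convex le S, S xs &
    (forall v, psi (e i) v -> ~ psi (e i) xs -> ~ S v)].
    by have [f Hf] := choice H; exists f.
  move=> i.
  case: (pselect (psi (e i) xs)) => H.
    by exists setT; split => //; exact: openT.
  have oC : open (~` psi (e i)) by rewrite openC; exact: (Hcl _).1.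
  have [V [oV cV Vx VC]] := b _ xs oC H.
  by exists V; split => // v Hv _ Vv; exact: VC v Vv Hv.
pose O j := GL `&` GR `&` iterI N j.
have oO : forall j, open (O j).
  move=> j; apply: openI; first exact: openI.
  by apply: iterI_open => i; case: (HN i).
have O_x : forall j, O j xs.
  by move=> j; split => //; apply: iterI_all => i; case: (HN i).
have O_N : forall i j, (i <= j)%N -> O j `<=` N i.
  by move=> i j ij x [_ H]; exact: iterI_sub ij _ H.
have O_dec : forall i j, (i <= j)%N -> O j `<=` O i.
  by move=> i j ij x [H1 H2]; split => //; exact: iterI_dec ij _ H2.
have O_GL : forall j, O j `<=` GL by move=> j x [[]].
have O_GR : forall j, O j `<=` GR by move=> j x [[]].
have [Z HZ] : exists Z : nat -> set Y, forall i, [/\ open (Z i), closed (Z i),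
    Z i ys & Z i `<=` [set y | psi y `&` O i !=set0]].
  suff H : forall i, exists S, [/\ open S, closed S,
    S ys & S `<=` [set y | psi y `&` O i !=set0]].
    by have [f Hf] := choice H; exists f.
  move=> i.
  apply: zdY; first exact: Hlsc (oO i).
  by exists xs; split => //; exact: O_x.
pose W := iterI Z.
have W_open : forall j, open (W j) by apply: iterI_open => i; case: (HZ i).
have W_closed : forall j, closed (W j) by apply: iterI_closed => i; case: (HZ i).
have W_ys : forall j, W j ys by apply: iterI_all => i; case: (HZ i).
have W_Z : forall j y, W j y -> psi y `&` O j !=set0.
  move=> j y Wy; have [_ _ _ H] := HZ j; apply: H.
  exact: iterI_sub (leqnn j) _ Wy.
have W_dec : forall i j, (i <= j)%N -> W j `<=` W i.
  by move=> i j ij; exact: iterI_dec.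
pose C w := (PL -> ~ lt w xs) /\ (PR -> ~ lt xs w).
pose psi' y x := psi y x /\ forall j, W j y -> closure (psi y `&` O j) x /\ C x.
have ltxx : ~ lt xs xs by case.
have Cxs : C xs by split => _.
have asym : forall w, lt w xs -> lt xs w -> False.
  by move=> w [H1 H2] [H3 _]; apply: H2; exact: a w xs H1 H3.
have lt_tri : forall w, w <> xs -> lt w xs \/ lt xs w.
  move=> w nw; case: (to w xs) => H; [left|right]; split => //.
  by move=> H'; apply: nw.
have notC : forall v, ~ C v -> (PL /\ lt v xs) \/ (PR /\ lt xs v).
  move=> v nC; case: (pselect (PL /\ lt v xs)) => [H|H]; [by left|right].
  apply: contrapT => H'; apply: nC; split => [pl vx|pr xv].
    by apply: H; split.
  by apply: H'; split.
have good_xs : forall y j v, psi y v -> O j v -> ~ C v -> psi y xs.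
  move=> y j v yv Ov /notC [[pl vx]|[pr xv]].
    exact: pl y v yv (O_GL j v Ov) vx.
  exact: pr y v yv (O_GR j v Ov) xv.
have W_inf : forall y, (forall j, W j y) -> psi y xs.
  move=> y Hy; have [i ei] := esurj y; apply: contrapT => nx.
  have [v [yv Ov]] := W_Z i y (Hy i).
  have [_ _ _ HNi] := HN i; rewrite ei in HNi.
  exact: HNi v yv nx (O_N i i (leqnn i) v Ov).
have Cclosed : closed C.
  by apply: closedI; apply: closed_cond; [exact: rl | exact: rr].
have side : forall U, open U -> U xs -> exists k, forall j, (k <= j)%N ->
    forall w, closure (O j) w -> C w -> w <> xs -> U w.
  move=> U oU Ux.
  have HN' : forall i, order_convex le (N i) /\ N i xs.
    by move=> i; case: (HN i).
  have [kL HkL] : exists kL, forall j, (kL <= j)%N ->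
      forall w, closure (O j) w -> lt w xs -> ~ PL -> U w.
    case: (pselect PL) => pl; first by exists 0%N => j _ w _ _ /(_ pl).
    have bad := nPL pl.
    have Hbad : forall G, open G -> G xs ->
        exists i v, [/\ G v, strict le v xs & ~ N i v].
      move=> G oG Gx; have [y [v [yv Gv vx nyx]]] := bad G oG Gx.
      have [i ei] := esurj y; exists i, v; split => //.
      have [_ _ _ HNi] := HN i; rewrite ei in HNi; exact: HNi v yv nyx.
    have [k Hk] := @side_base _ le HGO xs N O HN' O_N Hbad U oU Ux.
    by exists k => j kj w cw wx _; exact: Hk j kj w cw wx.
  have [kR HkR] : exists kR, forall j, (kR <= j)%N ->
      forall w, closure (O j) w -> lt xs w -> ~ PR -> U w.
    case: (pselect PR) => pr; first by exists 0%N => j _ w _ _ /(_ pr).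
    have bad := nPR pr.
    have Hbad : forall G, open G -> G xs ->
        exists i v, [/\ G v, strict (fun x y => le y x) v xs & ~ N i v].
      move=> G oG Gx; have [y [v [yv Gv [vx1 vx2] nyx]]] := bad G oG Gx.
      have [i ei] := esurj y; exists i, v; split => //.
        by split => // H; apply: vx2.
      have [_ _ _ HNi] := HN i; rewrite ei in HNi; exact: HNi v yv nyx.
    have HN'' : forall i, order_convex (fun x y => le y x) (N i) /\ N i xs.
      move=> i; have [cN Nx] := HN' i; split => //.
      by move=> p q s Hp Hs H1 H2; exact: cN s q p Hs Hp H2 H1.
    have [k Hk] := @side_base _ (fun x y => le y x) (@GO_flip _ le HGO) xs N O HN'' O_N Hbad U oU Ux.
    exists k => j kj w cw [wx1 wx2] _; apply: (Hk j kj w cw).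
    by split => // H; apply: wx2; rewrite H.
  exists (maxn kL kR) => j Hj w cw Cw nw.
  case: (lt_tri w nw) => H.
    apply: (HkL j _ w cw H); first exact: leq_trans (leq_maxl _ _) Hj.
    by move=> pl; exact: Cw.1 pl H.
  apply: (HkR j _ w cw H); first exact: leq_trans (leq_maxr _ _) Hj.
  by move=> pr; exact: Cw.2 pr H.
have usc : forall U, open U -> U xs -> exists k, forall y, W k y -> psi' y `<=` U.
  move=> U oU Ux; have [k Hk] := side U oU Ux; exists k => y Wy w [_ /(_ k Wy) [cw Cw]].
  case: (pselect (w = xs)) => [->//|nw]; apply: (Hk k (leqnn k) w _ Cw nw).
  by apply: (closureS (@subIsetr _ _ _)) cw.
have inf_sub : forall y, (forall j, W j y) -> psi' y `<=` [set xs].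
  move=> y Hy w Hw; apply: contrapT => nw.
  have oU : open (~` [set w]) by rewrite openC; exact: accessible_closed_set1 HX w.
  have [k Hk] := usc _ oU (fun h => nw (esym h)).
  exact: Hk y (Hy k) w Hw erefl.
have inf_mem : forall y, (forall j, W j y) -> psi' y xs.
  move=> y Hy; have yx := W_inf y Hy; split => // j _; split => //.
  by apply: subset_closure; split => //; exact: O_x.
have piece : forall y j, W j y -> ~ W j.+1 y ->
    forall x, psi' y x <-> closure (psi y `&` O j) x /\ C x.
  move=> y j Wj nWj x; split; first by move=> [_ /(_ j Wj)].
  move=> [cx Cx]; split.
    exact: (closure_min (@subIsetl _ _ _) (Hcl y).1) x cx.
  move=> i Wi; split => //.
  have ij : (i <= j)%N.
    by rewrite leqNgt; apply/negP => ji; apply: nWj; exact: W_dec ji _ Wi.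
  by apply: (closureS _) cx => p [pp Op]; split => //; exact: O_dec ij _ Op.
have out : forall y, ~ W 0 y -> forall x, psi' y x <-> psi y x.
  move=> y nW x; split; first by case.
  by move=> yx; split => // j Wj; exfalso; apply: nW; exact: W_dec (leq0n j) _ Wj.
have cases : forall y, ~ W 0 y \/ (exists j, W j y /\ ~ W j.+1 y) \/ (forall j, W j y).
  move=> y; case: (pselect (forall j, W j y)) => H; first by right; right.
  have [j nj] : exists j, ~ W j y.
    apply: contrapT => H'; apply: H => j; apply: contrapT => nW; apply: H'; by exists j.
  elim: j nj => [|j IH] nj; first by left.
  case: (pselect (W j y)) => Wj; last exact: IH Wj.
  by right; left; exists j; split.
have nonempty : forall y, psi' y !=set0.
  move=> y; case: (cases y) => [nW|[[j [Wj nWj]]|Hinf]].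
  - have [x yx] := (Hcl y).2; exists x; exact/(out y nW).
  - have [v [yv Ov]] := W_Z j y Wj.
    case: (pselect (C v)) => Cv.
      exists v; apply/(piece y j Wj nWj); split => //.
      by apply: subset_closure; split.
    have yx := good_xs y j v yv Ov Cv.
    exists xs; apply/(piece y j Wj nWj); split => //.
    by apply: subset_closure; split => //; exact: O_x.
  - by exists xs; exact: inf_mem.
have closed' : forall y, closed (psi' y).
  move=> y; case: (cases y) => [nW|[[j [Wj nWj]]|Hinf]].
  - exact: closed_ext (out y nW) (Hcl y).1.
  - apply: closed_ext (piece y j Wj nWj) _.
    by apply: closedI => //; exact: closed_closure.
  - apply: (@closed_ext _ _ ([set xs])); last exact: accessible_closed_set1.
    move=> x; split; first exact: inf_sub.
    by move=> ->; exact: inf_mem.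
have lsc' : lsc psi'.
  move=> U oU; apply: openP' => z [u [zu Uu]].
  case: (cases z) => [nW|[[j [Wj nWj]]|Hinf]].
  - exists (~` W 0 `&` [set y | psi y `&` U !=set0]); split.
    + by apply: openI; [rewrite openC; exact: W_closed | exact: Hlsc].
    + by split => //; exists u; split => //; exact/(out z nW).
    + by move=> y [nWy [v [yv Uv]]]; exists v; split => //; exact/(out y nWy).
  - have [cu Cu] := (piece z j Wj nWj u).1 zu.
    pose Pj := W j `&` ~` W j.+1.
    have oPj : open Pj by apply: openI; [exact: W_open | exact: closed_openC].
    case: (pselect (u = xs)) => [ux|nux].
    + exists (Pj `&` [set y | psi y `&` (U `&` O j) !=set0]); split.
      * by apply: openI oPj (Hlsc _ (openI oU (oO j))).
      * split; first by split.
        have zu' : psi z u by exact: (closure_min (@subIsetl _ _ _) (Hcl z).1) u cu.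
        by exists u; split => //; split => //; rewrite ux; exact: O_x.
      * move=> y [[Wjy nWjy] [v [yv [Uv Ov]]]].
        case: (pselect (C v)) => Cv.
          exists v; split => //; apply/(piece y j Wjy nWjy); split => //.
          by apply: subset_closure; split.
        have yx := good_xs y j v yv Ov Cv.
        exists xs; split; last by rewrite -ux.
        apply/(piece y j Wjy nWjy); split => //.
        by apply: subset_closure; split => //; exact: O_x.
    + pose K := ([set w | lt w xs] `&` [set _ | ~ PL]) `|`
                ([set w | lt xs w] `&` [set _ | ~ PR]).
      have oK : open K.
        by apply: openU; apply: openI; try exact: open_const; [exact: rl|exact: rr].
      have KC : forall w, K w -> C w.
        move=> w [[wx npl]|[xw npr]]; split => H //.
          by move=> xw; exact: asym w wx xw.
        by move=> wx; exact: asym w wx xw.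
      have Ku : K u.
        case: (lt_tri u nux) => H; [left|right]; split => //.
          by move=> pl; exact: Cu.1 pl H.
        by move=> pr; exact: Cu.2 pr H.
      exists (Pj `&` [set y | psi y `&` (U `&` O j `&` K) !=set0]); split.
      * apply: openI oPj _; apply: Hlsc; apply: openI => //; exact: openI.
      * split; first by split.
        have [p [[zp Op] [Up Kp]]] := closureP' cu (openI oU oK) (conj Uu Ku).
        by exists p; split.
      * move=> y [[Wjy nWjy] [v [yv [[Uv Ov] Kv]]]]; exists v; split => //.
        apply/(piece y j Wjy nWjy); split; last exact: KC.
        by apply: subset_closure; split.
  - have uxs : u = xs := inf_sub z Hinf u zu.
    have Ux : U xs by rewrite -uxs.
    have [k Hk] := usc U oU Ux.
    exists (W k); split; [exact: W_open | exact: Hinf | ].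
    move=> y Wy; have [w yw] := nonempty y; exists w; split => //.
    exact: Hk y Wy w yw.
exists psi'; split.
- split; last exact: lsc'.
  by move=> y; split; [exact: closed' | exact: nonempty].
- by move=> y x [].
- exists xs; split; [exact: inf_mem | exact: inf_sub | ].
  move=> U oU Ux; have [k Hk] := usc U oU Ux; exists (W k); split => //.
Qed.

End KL.

Theorem mainTheorem2 (X : topologicalType) (le : X -> X -> Prop) :
  accessible_space X -> GO_space le -> C_selective X.
Proof.
move=> HX HGO Y cY aY rY phi Hphi Hlsc.
case: (pselect (exists y : Y, True)) => [[y0 _]|nY]; last first.
  exists (fun y => match nY (ex_intro _ y I) with end); split.
  - by move=> y; exfalso; exact: nY (ex_intro _ y I).
  - by move=> y; exfalso; exact: nY (ex_intro _ y I).
have [e esurj] := @enum_surj Y y0 cY.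
have zdY := @zd Y rY e esurj.
have Inv0 : inv phi by split.
pose R (n : nat) (psi psi' : Y -> set X) := (forall y, psi' y `<=` psi y) /\
  exists xs, [/\ psi' (e n) xs, psi' (e n) `<=` [set xs] &
      forall U, open U -> U xs -> exists W, [/\ open W, W (e n) &
        forall y, W y -> psi' y `<=` U]].
have step : forall n psi, inv psi -> exists psi', inv psi' /\ R n psi psi'.
  move=> n psi Hpsi.
  have [psi' [H1 H2 H3]] := @KL X le HGO HX Y e esurj zdY psi Hpsi (e n).
  by exists psi'; split => //; split.
have [s [s0 sP]] := dep_seq Inv0 step.
have [xsel Hx] : exists xsel : nat -> X, forall n,
    [/\ s n.+1 (e n) (xsel n), s n.+1 (e n) `<=` [set xsel n] &
      forall U, open U -> U (xsel n) -> exists W, [/\ open W, W (e n) &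
        forall y, W y -> s n.+1 y `<=` U]].
  have H : forall n, exists x, [/\ s n.+1 (e n) x, s n.+1 (e n) `<=` [set x] &
      forall U, open U -> U x -> exists W, [/\ open W, W (e n) &
        forall y, W y -> s n.+1 y `<=` U]].
    by move=> n; have [_ [_ H]] := sP n.
  by have [f Hf] := choice H; exists f.
have [nsel Hn] : exists nsel : Y -> nat, forall y, e (nsel y) = y.
  by have [f Hf] := choice esurj; exists f.
have smono : forall i j, (i <= j)%N -> forall y, s j y `<=` s i y.
  move=> i j; elim: j => [|j IH]; first by rewrite leqn0 => /eqP -> y x.
  rewrite leq_eqVlt => /orP [/eqP -> y x //|]; rewrite ltnS => ij y x Hx'.
  have [_ [Hsub _]] := sP j.
  exact: IH ij y x (Hsub y x Hx').
have key : forall z m, s m z (xsel (nsel z)).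
  move=> z m; have [H1 H2 _] := Hx (nsel z); rewrite Hn in H1 H2.
  case: (leqP m (nsel z).+1) => mn.
    exact: smono m (nsel z).+1 mn z _ H1.
  have [[Hc _] _] := sP m; have [w sw] := (Hc z).2.
  have := H2 w (smono (nsel z).+1 m (ltnW mn) z w sw).
  by move=> <-.
exists (fun y => xsel (nsel y)); split.
- apply/continuousP => A oA; apply: openP' => z Az.
  have [_ _ H3] := Hx (nsel z).
  have [W [oW Wz HW]] := H3 A oA Az.
  rewrite Hn in Wz.
  exists W; split => // y Wy; exact: HW y Wy _ (key y (nsel z).+1).
- by move=> y; have := key y 0; rewrite s0.
Qed.
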